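(* Let $G_i=(V_i,E_i)$ be a graph, $i\in\{1,2\}$, let $\delta_2$ be the minimum degree of $G_2$, let $S_1\subseteq V_1$ and let $k$ be an integer. If $S_1\times V_2$ is a $k$-daf set in $G_1\times G_2$, then $S_1$ is a $(k-\delta_2)$-daf set in $G_1$.
   Context: All graphs are finite and simple (with non-empty vertex sets). For a graph $G=(V,E)$, a set $S\subseteq V$ and $v\in V$, let $\delta_S(v)=|\{u\in S: uv\in E\}|$ and $\overline{S}=V\setminus S$. For an integer $k$, a non-empty set $S\subseteq V$ is a defensive $k$-alliance if $\delta_S(v)\ge \delta_{\overline S}(v)+k$ for every $v\in S$. A set $X\subseteq V$ is a defensive $k$-alliance free set ($k$-daf set) if no defensive $k$-alliance $S$ satisfies $S\subseteq X$. The Cartesian product $G_1\times G_2$ of $G_1=(V_1,E_1)$, $G_2=(V_2,E_2)$ has vertex set $V_1\times V_2$, with $(a,b)$ adjacent to $(c,d)$ iff either $a=c$ and $bd\in E_2$, or $b=d$ and $ac\in E_1$. *)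

(* Defs.v *)
From mathcomp Require Import all_boot all_order all_algebra.
Set Implicit Arguments. Unset Strict Implicit. Unset Printing Implicit Defensive.
Import GRing.Theory Num.Theory.

(* A (finite simple) graph is a vertex type T : finType with an adjacency
   relation e : rel T, assumed symmetric and irreflexive in the statement. *)

Definition deg_in (T : finType) (e : rel T) (S : {set T}) (v : T) : nat :=
  #|[set u in S | e v u]|.

Definition deg (T : finType) (e : rel T) (v : T) : nat := deg_in e [set: T] v.

(* minimum degree (the vertex set is assumed non-empty in the statement;
   the seed #|T| exceeds every degree, so it never is the minimum then) *)
Definition min_deg (T : finType) (e : rel T) : nat :=
  \big[minn/#|T|]_(v : T) deg e v.

Definition def_alliance (T : finType) (e : rel T) (k : int) (S : {set T}) : Prop :=
  S != set0 /\
  forall v, v \in S -> ((deg_in e S v)%:Z >= (deg_in e (~: S) v)%:Z + k)%R.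

Definition daf (T : finType) (e : rel T) (k : int) (X : {set T}) : Prop :=
  forall S : {set T}, S \subset X -> ~ def_alliance e k S.

Definition cart_rel (T1 T2 : finType) (e1 : rel T1) (e2 : rel T2) : rel (T1 * T2) :=
  fun x y => ((x.1 == y.1) && e2 x.2 y.2) || ((x.2 == y.2) && e1 x.1 y.1).

(* Main.v *)
Require Import Defs.
From mathcomp Require Import all_boot all_order all_algebra.
From mathcomp Require Import zify.
Import GRing.Theory Num.Theory.

Lemma min_deg_le (T : finType) (e : rel T) (w : T) : min_deg e <= deg e w.
Proof.
rewrite /min_deg; have : w \in index_enum T by rewrite mem_index_enum.
elim: (index_enum T) => [//|x s IH]; rewrite big_cons inE.
case/orP => [/eqP <-|ws]; first exact: geq_minl.
by rewrite geq_min IH // orbT.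
Qed.

Theorem corollary2 (T1 T2 : finType) (e1 : rel T1) (e2 : rel T2)
  (e1_sym : symmetric e1) (e1_irr : irreflexive e1)
  (e2_sym : symmetric e2) (e2_irr : irreflexive e2)
  (T1_ne : 0 < #|T1|) (T2_ne : 0 < #|T2|)
  (S1 : {set T1}) (k : int) :
  daf (cart_rel e1 e2) k (setX S1 [set: T2]) ->
  daf e1 (k - (min_deg e2)%:Z)%R S1.
Proof.
move=> H S sub [Sne Sall].
have [w0 _] : exists w0 : T2, true.
  by move: T2_ne; rewrite -cardsT card_gt0 => /set0Pn [w _]; exists w.
apply: (H (setX S [set: T2])).
  by apply: setXS.
split.
  case/set0Pn: Sne => v vS; apply/set0Pn; exists (v, w0).
  by rewrite !inE vS.
case=> v w; rewrite !inE andbT => vS.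
have := Sall v vS.
set S' := setX S [set: T2].
set A := [set u in S | e1 v u].
set B := [set w' | e2 w w'].
have Hin : #|A| + #|B| <= deg_in (cart_rel e1 e2) S' (v, w).
  rewrite /deg_in.
  have -> : #|A| + #|B| = #|(fun u => (u, w)) @: A :|: (fun w' => (v, w')) @: B|.
    rewrite cardsU !card_imset; last 2 first.
    - by move=> x y [].
    - by move=> x y [].
    suff -> : (fun u => (u, w)) @: A :&: (fun w' => (v, w')) @: B = set0.
      by rewrite cards0 subn0.
    apply/setP => [[x y]]; rewrite !inE.
    apply/negbTE/negP => /andP [/imsetP [u uA [-> ->]] /imsetP [w' _ [eq1 _]]].
    by move: uA; rewrite inE eq1 e1_irr andbF.
  apply: subset_leq_card; apply/subsetP => x; rewrite !inE.
  case/orP => /imsetP [y]; rewrite inE.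
  - by case/andP => yS ev -> /=; rewrite /cart_rel /= yS eqxx ev orbT.
  - by move=> ew ->; rewrite /cart_rel /= ?inE vS eqxx ew.
have Hout : deg_in (cart_rel e1 e2) (~: S') (v, w) <= deg_in e1 (~: S) v.
  rewrite /deg_in.
  apply: (leq_trans _ (leq_imset_card (fun u => (u, w)) _)).
  apply: subset_leq_card; apply/subsetP => [[x y]]; rewrite !inE /cart_rel /=.
  rewrite andbT => /andP [nS /orP [/andP [/eqP exv _]|/andP [/eqP eyw ev]]].
    by move: nS; rewrite -exv vS.
  by apply/imsetP; exists x; rewrite ?inE ?nS ?ev // eyw.
have Hd : min_deg e2 <= #|B|.
  apply: leq_trans (@min_deg_le _ e2 w) _; rewrite /deg /deg_in.
  by apply: subset_leq_card; apply/subsetP => x; rewrite !inE.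
move=> Hv.
have h1 : ((deg_in e1 S v)%:Z + #|B|%:Z <= (deg_in (cart_rel e1 e2) S' (v, w))%:Z)%R.
  by rewrite -PoszD lez_nat.
have h2 : ((deg_in (cart_rel e1 e2) (~: S') (v, w))%:Z <= (deg_in e1 (~: S) v)%:Z)%R.
  by rewrite lez_nat.
have h3 : ((min_deg e2)%:Z <= #|B|%:Z)%R by rewrite lez_nat.
have hA : deg_in e1 S v = #|A| by [].
rewrite hA in h1 Hv.
lia.
Qed.
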